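(* Let $K$ be a finite simplicial complex with positive edge lengths, and let $h\in H_d(K;\mathbb{Z}_2)$ be a homology class. Let $z_r$ be a cycle in $h$ of minimal radius and $z_d$ a cycle in $h$ of minimal diameter. Then $\mathrm{diam}(z_r)\le 2\,\mathrm{diam}(z_d)$.
   Context: For vertices $p,q$ of $K$, $\mathrm{dist}(p,q)$ is the length of a shortest path between them in the 1-skeleton of $K$. For a cycle $z$ with vertex set $\mathrm{Vert}(z)$: $\mathrm{diam}(z)=\max_{p,q\in\mathrm{Vert}(z)}\mathrm{dist}(p,q)$ and $\mathrm{rad}(z)=\min_{p\in\mathrm{Vert}(K)}\max_{q\in\mathrm{Vert}(z)}\mathrm{dist}(p,q)$. Thus $z_r=\arg\min_{z\in h}\mathrm{rad}(z)$ and $z_d=\arg\min_{z\in h}\mathrm{diam}(z)$. *)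

(* Defs.v *)
From HB Require Import structures.
From mathcomp Require Import all_boot all_order all_algebra.
From mathcomp Require Import classical_sets reals constructive_ereal ereal.
Set Implicit Arguments. Unset Strict Implicit. Unset Printing Implicit Defensive.
Import Order.TTheory GRing.Theory Num.Theory.
Local Open Scope ring_scope.


Section Complexes.
Variable V : finType.

(* A finite (abstract) simplicial complex on the vertex type V: a family of
   nonempty vertex sets closed under taking nonempty subsets. A k-simplex
   has k+1 vertices. *)
Definition is_simplicial_complex (K : {set {set V}}) : Prop :=
  (forall s, s \in K -> s != finset.set0) /\
  (forall s (t : {set V}), s \in K -> t \subset s -> t != finset.set0 -> t \in K).

(* Z_2 d-chains of K = sets of d-simplices of K. Addition = symmetric difference. *)
Definition is_chain (K : {set {set V}}) (d : nat) (c : {set {set V}}) : Prop :=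
  c \subset [set s in K | #|s| == d.+1].

Definition chain_add (c1 c2 : {set {set V}}) : {set {set V}} :=
  (c1 :\: c2) :|: (c2 :\: c1).

(* Z_2 boundary of a d-chain: the (d-1)-faces contained in an odd number of
   simplices of c. The boundary of a 0-chain is 0 (non-augmented homology). *)
Definition bdry (d : nat) (c : {set {set V}}) : {set {set V}} :=
  [set f : {set V} | [&& (0 < d)%N, #|f| == d & odd #|[set s in c | f \subset s]|]].

Definition is_cycle K d (z : {set {set V}}) : Prop :=
  is_chain K d z /\ bdry d z = finset.set0.

Definition is_boundary K d (c : {set {set V}}) : Prop :=
  exists b, is_chain K d.+1 b /\ bdry d.+1 b = c.

Definition in_class K d (z0 z : {set {set V}}) : Prop :=
  is_cycle K d z /\ is_boundary K d (chain_add z z0).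

Definition Vert (z : {set {set V}}) : {set V} := \bigcup_(s in z) s.

End Complexes.

Section Metric.
Variables (R : realType) (V : finType) (K : {set {set V}}) (w : {set V} -> R).

Definition adj (x y : V) : bool := (x != y) && ([set x; y] \in K).

Definition walk_len (x : V) (s : seq V) : R :=
  \sum_(e <- pairmap (fun a b => [set a; b]) x s) w e.

(* shortest-path distance in the weighted 1-skeleton (+oo if unreachable) *)
Definition dist (p q : V) : \bar R :=
  ereal_inf [set (walk_len p s)%:E | s in
              [set s : seq V | path adj p s && (last p s == q)]]%classic.

(* max over an empty vertex set is taken to be 0 *)
Definition diam (z : {set {set V}}) : \bar R :=
  \big[maxe/0%E]_(p in Vert z) \big[maxe/0%E]_(q in Vert z) dist p q.

Definition rad (z : {set {set V}}) : \bar R :=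
  \big[mine/+oo%E]_(p : V) \big[maxe/0%E]_(q in Vert z) dist p q.

End Metric.

(* Main.v *)
Require Import Defs.
From HB Require Import structures.
From mathcomp Require Import all_boot all_order all_algebra.
From mathcomp Require Import classical_sets reals constructive_ereal ereal.
Import Order.TTheory GRing.Theory Num.Theory.
Local Open Scope ring_scope.

Lemma last_rev_belast (V : Type) (y : V) s : last (last y s) (rev (belast y s)) = y.
Proof. case: s => [|z s] //=. by rewrite rev_cons last_rcons. Qed.

Lemma walk_len_rcons (R : realType) (V : finType) (w : {set V} -> R) x s y :
  walk_len w x (rcons s y) = walk_len w x s + w [set last x s; y].
Proof. by rewrite /walk_len -cats1 pairmap_cat big_cat /= big_seq1. Qed.

Lemma walk_len_cat (R : realType) (V : finType) (w : {set V} -> R) x s1 s2 :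
  walk_len w x (s1 ++ s2) = walk_len w x s1 + walk_len w (last x s1) s2.
Proof. by rewrite /walk_len pairmap_cat big_cat. Qed.

Lemma walk_len_rev (R : realType) (V : finType) (w : {set V} -> R) x s :
  walk_len w (last x s) (rev (belast x s)) = walk_len w x s.
Proof.
elim: s x => [|y s IH] x //=.
rewrite rev_cons walk_len_rcons IH.
have e : last (last y s) (rev (belast y s)) = y by apply: last_rev_belast.
rewrite e.
rewrite /walk_len big_cons /= addrC; congr (_ + _); by rewrite finset.setUC.
Qed.

Lemma adj_sym (V : finType) (K : {set {set V}}) x y : adj K x y = adj K y x.
Proof. by rewrite /adj eq_sym finset.setUC. Qed.

Lemma walk_len_ge0 (R : realType) (V : finType) (K : {set {set V}}) (w : {set V} -> R) :
  (forall e, e \in K -> (#|e| = 2)%N -> 0 < w e) ->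
  forall x s, path (adj K) x s -> 0 <= walk_len w x s.
Proof.
move=> hw x s; elim: s x => [|y s IH] x /=.
  by rewrite /walk_len big_nil.
move=> /andP[hxy hp]; rewrite /walk_len big_cons /=.
apply: addr_ge0; last exact: IH.
move: hxy; rewrite /adj => /andP[hne hK]; apply: ltW; apply: hw => //.
by rewrite cards2 hne.
Qed.

Lemma dist_ge0 (R : realType) (V : finType) (K : {set {set V}}) (w : {set V} -> R) :
  (forall e, e \in K -> (#|e| = 2)%N -> 0 < w e) ->
  forall p q, (0 <= dist K w p q)%E.
Proof.
move=> hw p q; apply: le_ereal_inf_tmp => _ [s /= /andP[hp hl] <-].
by rewrite lee_fin; apply: walk_len_ge0 hp.
Qed.

Lemma dist_sym (R : realType) (V : finType) (K : {set {set V}}) (w : {set V} -> R) p q :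
  (dist K w p q <= dist K w q p)%E.
Proof.
apply: le_ereal_inf_tmp => _ [s /= /andP[hp /eqP hl] <-].
apply: ereal_inf_lbound; exists (rev (belast q s)).
  rewrite /= -hl.
  have -> : path (adj K) (last q s) (rev (belast q s)).
    rewrite rev_path; rewrite (@eq_path _ _ (adj K)) // => a b; exact: adj_sym.
  by rewrite last_rev_belast eqxx.
by rewrite -hl walk_len_rev.
Qed.

Lemma dist_tri (R : realType) (V : finType) (K : {set {set V}}) (w : {set V} -> R) :
  (forall e, e \in K -> (#|e| = 2)%N -> 0 < w e) ->
  forall a p b, (dist K w a b <= dist K w a p + dist K w p b)%E.
Proof.
move=> hw a p b.
have step1 : forall s1, path (adj K) a s1 -> last a s1 = p ->
    (dist K w a b <= (walk_len w a s1)%:E + dist K w p b)%E.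
  move=> s1 hp1 hl1; rewrite -leeBlDl //.
  apply: le_ereal_inf_tmp => _ [s2 /= /andP[hp2 hl2] <-].
  rewrite EFinN leeBlDl // -EFinD; apply: ereal_inf_lbound; exists (s1 ++ s2).
    by rewrite /= cat_path last_cat hl1 hp1 hp2 hl2.
  by rewrite walk_len_cat hl1.
have [->|hfin] := eqVneq (dist K w p b) +oo%E.
  rewrite addey ?leey //; have := (@dist_ge0 R V K w hw a p); by case: (dist K w a p).
have hf : dist K w p b \is a fin_num.
  by rewrite ge0_fin_numE ?dist_ge0 // lt_neqAle hfin leey.
rewrite -leeBlDr //.
apply: le_ereal_inf_tmp => _ [s1 /= /andP[hp1 /eqP hl1] <-].
by rewrite leeBlDr //; apply: step1.
Qed.

Lemma le_bigmaxe (R : realType) (I : finType) (A : {set I}) (F : I -> \bar R) i :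
  i \in A -> (F i <= \big[maxe/0%E]_(j in A) F j)%E.
Proof. by move=> hi; rewrite (bigD1 i) //= le_max lexx. Qed.

Lemma bigmaxe_le (R : realType) (I : finType) (A : {set I}) (F : I -> \bar R) c :
  (0 <= c)%E -> (forall i, i \in A -> F i <= c)%E ->
  (\big[maxe/0%E]_(j in A) F j <= c)%E.
Proof.
move=> h0 h; apply: (big_ind (fun x => x <= c)%E) => //.
by move=> x y hx hy; rewrite ge_max hx hy.
Qed.

Lemma bigmaxe_ge0 (R : realType) (I : finType) (A : {set I}) (F : I -> \bar R) :
  (0 <= \big[maxe/0%E]_(j in A) F j)%E.
Proof.
apply: (big_rec (fun x => 0 <= x)%E) => // i x _ hx.
by rewrite le_max hx orbT.
Qed.

Lemma rad_le (R : realType) (V : finType) (K : {set {set V}}) (w : {set V} -> R) (z : {set {set V}}) (p : V) :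
  (Defs.rad K w z <= \big[maxe/0%E]_(q in Vert z) dist K w p q)%E.
Proof. by rewrite /Defs.rad (bigD1 p) //= ge_min lexx. Qed.

Theorem theorem2p6 (R : realType) (V : finType) (K : {set {set V}})
  (w : {set V} -> R) (d : nat) (z0 zr zd : {set {set V}}) :
  is_simplicial_complex K ->
  (forall e, e \in K -> (#|e| = 2)%N -> 0 < w e) ->
  is_cycle K d z0 ->
  in_class K d z0 zr ->
  (forall z, in_class K d z0 z -> (Defs.rad K w zr <= Defs.rad K w z)%E) ->
  in_class K d z0 zd ->
  (forall z, in_class K d z0 z -> (Defs.diam K w zd <= Defs.diam K w z)%E) ->
  (Defs.diam K w zr <= 2%:E * Defs.diam K w zd)%E.
Proof.
move=> _ hw _ _ hr hzd _.
have d0 : (0 <= Defs.diam K w zd)%E by apply: bigmaxe_ge0.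
case: (set_0Vmem (Vert zr)) => [e0|[a ha]].
  apply: (@le_trans _ _ 0%E); last by apply: mule_ge0.

  apply: bigmaxe_le => // p; by rewrite e0 finset.in_set0.
rewrite (mule_natl _ 2) mule2n.
have A : (Defs.diam K w zr <= Defs.rad K w zr + Defs.rad K w zr)%E.
  rewrite /Defs.rad; apply: (big_ind (fun x => Defs.diam K w zr <= x + x)%E).
  - by rewrite addey // leey.
  - move=> x y hx hy; rewrite minEle; by case: ifP.
  move=> p _.
  have M0 := @bigmaxe_ge0 R _ (Vert zr) (fun q => dist K w p q).
  apply: bigmaxe_le; first exact: adde_ge0.
  move=> x hx; apply: bigmaxe_le; first exact: adde_ge0.
  move=> y hy; apply: le_trans (@dist_tri R V K w hw x p y) _.
  apply: leeD; last exact: le_bigmaxe.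
  apply: le_trans (@dist_sym R V K w x p) _; exact: le_bigmaxe.
have B := hr _ hzd.
have C : (Defs.rad K w zd <= Defs.diam K w zd)%E.
  case: (set_0Vmem (Vert zd)) => [e0|[p hp]].
    apply: le_trans (@rad_le R V K w zd a) _.
    apply: bigmaxe_le => // q; by rewrite e0 finset.in_set0.
  apply: le_trans (@rad_le R V K w zd p) _; exact: (@le_bigmaxe R V (Vert zd) (fun p => \big[maxe/0%E]_(q in Vert zd) dist K w p q) p hp).
apply: le_trans A _; apply: leeD; exact: le_trans B C.
Qed.
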